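(* Let $G$ be finite and $z\in\mathbb C\setminus\{0\}$. Then the eigenspace $\{f\in D_\infty:\mathcal Tf=zf\}$ is contained in $D_1$ and, under the identification $D_1\cong\mathrm{Map}(E)$, equals $\mathrm{Eq}(S,z\,\mathrm{Id})$. If $z\notin\{-1,0,1\}$, the twisted gradient $d_z$ gives an isomorphism from $\mathrm{Eq}(\Sigma,R_z)=\mathrm{Eq}(\Delta,L_z)$ onto this eigenspace.
   Context: $G$ is a finite connected graph with vertex set $V$ (no loops, no multiple edges, every vertex of degree $\ge2$); $\deg v=1+q(v)$. $E$ oriented edges, $\iota,\tau$ initial/terminal vertex maps, $\bar e$ opposite; turn $e\rightsquigarrow e'$ iff $\tau(e)=\iota(e')$, $e'\ne\bar e$. $P$ = infinite paths $(e_1,e_2,\dots)$ with $e_i\rightsquigarrow e_{i+1}$; $(\mathcal Tf)(e_1,\dots)=\sum_{e_0\rightsquigarrow e_1}f(e_0,e_1,\dots)$. $D_m$ = functions on $P$ depending only on $e_1,\dots,e_m$; $D_\infty=\bigcup_mD_m$; $D_1\cong\mathrm{Map}(E)$. $(Sg)(e)=\sum_{e'\rightsquigarrow e}g(e')$; $(\Sigma f)(v)=\sum_{w\text{ adj. }v}f(w)$; $(\Delta f)(v)=\frac{1}{1+q(v)}\sum_{w\text{ adj. }v}f(w)$; $R_z$, $L_z$ = multiplication by $z+q(v)z^{-1}$ resp. $\frac{z+z^{-1}q(v)}{1+q(v)}$; $d_zf=f\circ\iota-z^{-1}f\circ\tau$; $\mathrm{Eq}(A,B)=\{f:Af=Bf\}$.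 *)

(* Defs.v *)
From HB Require Import structures.
From mathcomp Require Import all_boot all_algebra.
From mathcomp Require Import complex reals Rstruct.
Set Implicit Arguments. Unset Strict Implicit. Unset Printing Implicit Defensive.
Import GRing.Theory.
Local Open Scope ring_scope.

Definition C : fieldType := complex Rdefinitions.R.

Definition simple_graph (V : finType) (adj : rel V) : Prop :=
  symmetric adj /\ irreflexive adj.

Definition graph_connected (V : finType) (adj : rel V) : Prop :=
  forall x y : V, connect adj x y.

Definition deg (V : finType) (adj : rel V) (v : V) : nat := #|[set w | adj v w]|.

Definition qC (V : finType) (adj : rel V) (v : V) : C := (deg adj v)%:R - 1.

Definition oedge (V : finType) (adj : rel V) : finType :=
  {p : V * V | adj p.1 p.2}.

Definition iota_ (V : finType) (adj : rel V) (e : oedge adj) : V := (val e).1.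
Definition tau_ (V : finType) (adj : rel V) (e : oedge adj) : V := (val e).2.

(* turn e ~> e' iff tau e = iota e' and e' <> bar e; given tau e = iota e',
   e' = bar e iff tau e' = iota e. *)
Definition turn (V : finType) (adj : rel V) (e e' : oedge adj) : bool :=
  (tau_ e == iota_ e') && ~~ ((iota_ e' == tau_ e) && (tau_ e' == iota_ e)).

(* Infinite non-backtracking paths (e_1, e_2, ...), indexed from 0. *)
Record ipath (V : finType) (adj : rel V) := IPath {
  pe : nat -> oedge adj;
  pe_turn : forall i, turn (pe i) (pe i.+1) }.

Lemma pcons_turn (V : finType) (adj : rel V) (e0 : oedge adj) (p : ipath adj)
  (H : turn e0 (pe p 0)) :
  forall i, turn ((fun j => match j with 0 => e0 | j'.+1 => pe p j' end) i)
                 ((fun j => match j with 0 => e0 | j'.+1 => pe p j' end) i.+1).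
Proof. by case=> [|i] //=; apply: pe_turn. Qed.

Definition pcons (V : finType) (adj : rel V) (e0 : oedge adj) (p : ipath adj)
  (H : turn e0 (pe p 0)) : ipath adj := IPath (pcons_turn H).

Definition transfer (V : finType) (adj : rel V) (f : ipath adj -> C)
  (p : ipath adj) : C :=
  \sum_(x : {e0 : oedge adj | turn e0 (pe p 0)}) f (pcons (valP x)).

Definition D_m (V : finType) (adj : rel V) (m : nat) (f : ipath adj -> C) : Prop :=
  forall p p' : ipath adj, (forall i, (i < m)%N -> pe p i = pe p' i) -> f p = f p'.

Definition D_inf (V : finType) (adj : rel V) (f : ipath adj -> C) : Prop :=
  exists m, D_m m f.

(* Identification Map(E) -> D_1 : g |-> ((e_1, ...) |-> g e_1). *)
Definition lift1 (V : finType) (adj : rel V) (g : oedge adj -> C) : ipath adj -> C :=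
  fun p => g (pe p 0).

Definition Sop (V : finType) (adj : rel V) (g : oedge adj -> C) (e : oedge adj) : C :=
  \sum_(e' : oedge adj | turn e' e) g e'.

Definition Sigma (V : finType) (adj : rel V) (f : V -> C) (v : V) : C :=
  \sum_(w : V | adj v w) f w.

Definition Delta (V : finType) (adj : rel V) (f : V -> C) (v : V) : C :=
  (1 + qC adj v)^-1 * \sum_(w : V | adj v w) f w.

Definition Rz (V : finType) (adj : rel V) (z : C) (f : V -> C) (v : V) : C :=
  (z + qC adj v * z^-1) * f v.

Definition Lz (V : finType) (adj : rel V) (z : C) (f : V -> C) (v : V) : C :=
  ((z + z^-1 * qC adj v) / (1 + qC adj v)) * f v.

Definition dz (V : finType) (adj : rel V) (z : C) (f : V -> C) (e : oedge adj) : C :=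
  f (iota_ e) - z^-1 * f (tau_ e).

Definition Eqsp (X Y : Type) (A B : (X -> C) -> (Y -> C)) (f : X -> C) : Prop :=
  forall y, A f y = B f y.

Definition eigT (V : finType) (adj : rel V) (z : C) (f : ipath adj -> C) : Prop :=
  D_inf f /\ forall p, transfer f p = z * f p.

(* Main.v *)
Require Import Defs.
From HB Require Import structures.
From mathcomp Require Import all_boot all_algebra.
From mathcomp Require Import complex reals Rstruct.
From mathcomp Require Import ring.
Import GRing.Theory Num.Theory.
Local Open Scope ring_scope.

Set Implicit Arguments. Unset Strict Implicit. Unset Printing Implicit Defensive.
Module Helpers.
Lemma sum_sig (T : finType) (P Q : pred T) (F : T -> C) :
  \sum_(x : {x | P x} | Q (val x)) F (val x) = \sum_(x | P x && Q x) F x.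
Proof.
symmetry.
rewrite (reindex_omap (val : {x | P x} -> T) insub); last first.
  by move=> i /andP[iA Pi]; rewrite insubT.
by apply: eq_bigl=> -[i iA]/=; rewrite insubT ?iA /= eqxx andbT.
Qed.

Section S.
Variables (V : finType) (adj : rel V).
Hypothesis Hsimple : simple_graph adj.
Hypothesis Hdeg : forall v : V, (2 <= deg adj v)%N.

Lemma ex_next (e : oedge adj) : exists e', turn e e'.
Proof.
have : (1 < #|[set w | adj (tau_ e) w]|)%N by apply: Hdeg.
rewrite (cardD1 (iota_ e)); set k := #|[predD1 _ & _]| => H.
have : (0 < k)%N by move: H; case: (_ \in _) => //= /ltnW.
move=> /card_gt0P [w]; rewrite !inE => /andP[wn aw].
have ae : adj (tau_ e) w by [].
exists (exist _ (tau_ e, w) ae).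
by rewrite /turn /iota_ /tau_ /= eqxx /=.
Qed.

Definition next (e : oedge adj) : oedge adj := odflt e [pick e' | turn e e'].

Lemma turn_next e : turn e (next e).
Proof.
rewrite /next; case: pickP => //= H; case: (ex_next e) => e' He.
by rewrite H in He.
Qed.

Definition ext (e : oedge adj) : ipath adj :=
  @IPath V adj (fun i => iter i next e) (fun i => turn_next _).

Lemma ext0 e : pe (ext e) 0 = e. Proof. by []. Qed.

Definition pconsd (e0 : oedge adj) (p : ipath adj) : ipath adj :=
  (if turn e0 (pe p 0) as b return turn e0 (pe p 0) = b -> ipath adj
   then fun H => pcons H else fun _ => p) erefl.

Lemma pe_pconsd e0 p : turn e0 (pe p 0) ->
  forall i, pe (pconsd e0 p) i = (if i is j.+1 then pe p j else e0).
Proof.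
move=> H i; rewrite /pconsd.
move: (erefl (turn e0 (pe p 0))).
case: {2 3}(turn e0 (pe p 0)) => [H'|H']; first by case: i.
by rewrite H in H'.
Qed.


Lemma transfer_pconsd (f : ipath adj -> C) k : D_m k f ->
  forall p, transfer f p = \sum_(e0 | turn e0 (pe p 0)) f (pconsd e0 p).
Proof.
move=> Hf p; rewrite /transfer.
transitivity (\sum_(x : {e0 | turn e0 (pe p 0)}) f (pconsd (val x) p)).
  apply: eq_bigr => x _; apply: Hf => i _.
  by rewrite pe_pconsd ?(valP x) //; case: i.
rewrite (@sum_sig _ (fun e0 => turn e0 (pe p 0)) xpredT (fun e0 => f (pconsd e0 p))).
by apply: eq_bigl => e0; rewrite andbT.
Qed.

Lemma lift1_D1 (g : oedge adj -> C) : D_m 1 (lift1 g).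
Proof. by move=> p p' H; rewrite /lift1 H. Qed.

Lemma transfer_lift1 (g : oedge adj -> C) p : transfer (lift1 g) p = Sop g (pe p 0).
Proof.
rewrite (transfer_pconsd (lift1_D1 g)) /Sop; apply: eq_bigr => e0 H.
by rewrite /lift1 pe_pconsd.
Qed.

Lemma descent (z : C) (f : ipath adj -> C) m : z != 0 ->
  (forall p, transfer f p = z * f p) -> D_m m.+2 f -> D_m m.+1 f.
Proof.
move=> Hz Ht Hm p p' Hpp'.
have E q : f q = z^-1 * transfer f q by rewrite Ht mulKf.
rewrite E (E p') !(transfer_pconsd Hm) -(Hpp' 0 erefl); congr (_ * _).
apply: eq_bigr => e0 He; apply: Hm => i Hi.
have He' : turn e0 (pe p' 0) by rewrite -(Hpp' 0 erefl).
rewrite !pe_pconsd //; case: i Hi => // j Hj; exact: Hpp'.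
Qed.

Lemma part1 (z : C) (f : ipath adj -> C) : z != 0 -> eigT z f -> D_m 1 f.
Proof.
move=> Hz [[m Hm] Ht]; elim: m Hm => [|m IH] Hm.
  by move=> p p' _; apply: Hm.
case: m IH Hm => [|m] IH Hm //.
by apply: IH; exact: (descent Hz Ht Hm).
Qed.

Lemma part2 (z : C) (g : oedge adj -> C) :
  eigT z (lift1 g) <-> Eqsp (@Sop V adj) (fun h e => z * h e) g.
Proof.
split.
  move=> [_ Ht] e; have := Ht (ext e); by rewrite transfer_lift1.
move=> H; split; first by exists 1%N; apply: lift1_D1.
by move=> p; rewrite transfer_lift1 H.
Qed.

End S.
Lemma natC_neq0 (n : nat) : (0 < n)%N -> (n%:R : C) != 0.
Proof. move=> H. have : (n%:R : complex Rdefinitions.R) != 0 by rewrite pnatr_eq0 -lt0n. exact. Qed.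

Section G.
Variables (V : finType) (adj : rel V).
Hypothesis Hsimple : simple_graph adj.
Hypothesis Hdeg : forall v : V, (2 <= deg adj v)%N.

Definition gV (g : oedge adj -> C) (w u : V) : C :=
  if @insub _ (fun p : V * V => adj p.1 p.2) (oedge adj) (w, u) is Some e then g e else 0.

Lemma gVE g e : gV g (iota_ e) (tau_ e) = g e.
Proof. by rewrite /gV /iota_ /tau_ -surjective_pairing valK. Qed.

Definition mke u v (H : adj u v) : oedge adj := exist _ (u, v) H.

Lemma sum_in (e : oedge adj) (F : V -> V -> C) :
  \sum_(e' | turn e' e) F (iota_ e') (tau_ e') =
  \sum_(w | adj w (iota_ e) && (w != tau_ e)) F w (iota_ e).
Proof.
pose Q (p : V * V) := (p.2 == iota_ e) && ~~((iota_ e == p.2) && (tau_ e == p.1)).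
have -> : \sum_(e' | turn e' e) F (iota_ e') (tau_ e') =
   \sum_(x : {p : V * V | adj p.1 p.2} | Q (val x)) (fun p : V * V => F p.1 p.2) (val x) by [].
rewrite (@sum_sig _ (fun p : V * V => adj p.1 p.2) Q (fun p => F p.1 p.2)).
rewrite -(@pair_big_dep _ _ _ _ _ xpredT (fun w y => adj w y && Q (w, y)) F) /=.
rewrite [RHS]big_mkcond; apply: eq_bigr => w _.
rewrite big_mkcond (bigD1 (iota_ e)) //= big1 ?addr0.
  by rewrite /Q /= !eqxx /= eq_sym.
by move=> y /negbTE yu; rewrite /Q /= yu andbF.
Qed.

Lemma sum_const (P : pred V) (c : C) : \sum_(w | P w) c = c *+ #|P|.
Proof. by rewrite -sumr_const. Qed.

Lemma card_out u v : adj u v -> #|[pred w | adj w u && (w != v)]| = (deg adj u - 1)%N.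
Proof.
move=> H; rewrite /deg (cardD1 v) inE H add1n subSS subn0.
apply: eq_card => w; rewrite !inE (proj1 Hsimple w u) andbC.
by [].
Qed.

Lemma qCE u : qC adj u = (deg adj u - 1)%N%:R.
Proof. by rewrite /qC natrB // ltnW. Qed.

Lemma sum_split (F : V -> C) u v : adj u v ->
  \sum_(w | adj u w) F w = F v + \sum_(w | adj w u && (w != v)) F w.
Proof.
move=> H; rewrite (bigD1 v) //=; congr (_ + _); apply: eq_bigl => w.
by rewrite (proj1 Hsimple w u) andbC.
Qed.


Lemma sum_deg u (c : C) : \sum_(w | adj u w) c = c * (1 + qC adj u).
Proof.
rewrite sum_const /qC addrC subrK mulr_natr; congr (_ *+ _).
by rewrite /deg; apply: eq_card => w; rewrite inE.
Qed.

Lemma onepq_neq0 u : 1 + qC adj u != 0.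
Proof. rewrite /qC addrC subrK; apply: natC_neq0; exact: leq_trans (Hdeg u). Qed.

Lemma p3a (z : C) (f : V -> C) : z != 0 ->
  Eqsp (@Sigma V adj) (Rz adj z) f <-> Eqsp (@Delta V adj) (Lz adj z) f.
Proof.
move=> Hz; split => H v; have hd := onepq_neq0 v.
  rewrite /Delta /Lz; have := H v; rewrite /Sigma /Rz => ->; field; by rewrite hd ?Hz.
have := H v; rewrite /Delta /Lz /Sigma /Rz => E.
rewrite -[LHS](mulVKf hd) E; field; by rewrite hd Hz.
Qed.

Lemma Sop_dz (z : C) (f : V -> C) : z != 0 ->
  Eqsp (@Sigma V adj) (Rz adj z) f -> Eqsp (@Sop V adj) (fun h e => z * h e) (dz z f).
Proof.
move=> Hz Hf e; rewrite /Sop /dz.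
have E0 := sum_in e (fun w y => f w - z^-1 * f y); rewrite /= in E0.
rewrite E0 sumrB sum_const card_out ?(valP e) // -mulr_natr -qCE.
have Hs := sum_split f (valP e); have := Hf (iota_ e); rewrite /Sigma /Rz.
rewrite Hs => E.
have -> : \sum_(w | adj w (iota_ e) && (w != tau_ e)) f w =
   (z + qC adj (iota_ e) * z^-1) * f (iota_ e) - f (tau_ e).
  by rewrite -E addrC addKr.
field; exact: Hz.
Qed.


Lemma zz1 (z : C) : z != 1 -> z != -1 -> z * z - 1 != 0.
Proof.
move=> H1 H2; have : (z - 1) * (z + 1) != 0.
  by rewrite mulf_neq0 // ?subr_eq0 // addr_eq0.
by have -> : (z - 1) * (z + 1) = z * z - 1 by ring.
Qed.

Lemma nbr v : exists w, adj v w.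
Proof.
have : (0 < deg adj v)%N by exact: leq_trans (Hdeg v).
by move=> /card_gt0P [w]; rewrite inE => H; exists w.
Qed.

Lemma p3c (z : C) (f1 f2 : V -> C) : z != 0 -> z != 1 -> z != -1 ->
  (forall e, @dz V adj z f1 e = @dz V adj z f2 e) -> forall v, f1 v = f2 v.
Proof.
move=> Hz H1 H2 Hd v; case: (nbr v) => w Hvw.
have Hwv : adj w v by rewrite (proj1 Hsimple).
have E1 := Hd (mke Hvw); have E2 := Hd (mke Hwv); rewrite /dz /= in E1 E2.
have E1' : z * (f1 v - f2 v) = f1 w - f2 w.
  have : z * ((f1 v - z^-1 * f1 w) - (f2 v - z^-1 * f2 w)) = 0 by rewrite E1 subrr mulr0.
  move=> E; apply/eqP; rewrite -subr_eq0; apply/eqP; rewrite -[RHS]E; field; exact: Hz.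
have E2' : z * (f1 w - f2 w) = f1 v - f2 v.
  have : z * ((f1 w - z^-1 * f1 v) - (f2 w - z^-1 * f2 v)) = 0 by rewrite E2 subrr mulr0.
  move=> E; apply/eqP; rewrite -subr_eq0; apply/eqP; rewrite -[RHS]E; field; exact: Hz.
have : (z * z - 1) * (f1 v - f2 v) = 0.
  by rewrite mulrBl mul1r -mulrA E1' E2' subrr.
move/eqP; rewrite mulf_eq0 (negbTE (zz1 H1 H2)) /= subr_eq0 => /eqP //.
Qed.

Lemma p3d (z : C) (F : ipath adj -> C) : z != 0 -> z != 1 -> z != -1 ->
  eigT z F -> exists2 f : V -> C, Eqsp (@Sigma V adj) (Rz adj z) f &
          forall p, F p = lift1 (@dz V adj z f) p.
Proof.
move=> Hz H1 H2 HF.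
have D1 := part1 Hz HF.
pose g e := F (ext Hdeg e).
have Fg p : F p = g (pe p 0).
  by apply: D1 => -[|i] // _.
have Sg : Eqsp (@Sop V adj) (fun h e => z * h e) g.
  apply/(part2 Hdeg); split; first by exists 1%N; apply: lift1_D1.
  have LF q : lift1 g q = F q by rewrite /lift1 Fg.
  move=> p; rewrite LF -(proj2 HF p); apply: eq_bigr => x _; exact: LF.
pose A u := \sum_(w | adj u w) gV g w u.
have star u v (H : adj u v) : z * gV g u v = A u - gV g v u.
  have := Sg (mke H); rewrite /Sop.
  rewrite (eq_bigr (fun e' => gV g (iota_ e') (tau_ e'))); last by move=> e' _; rewrite gVE.
  rewrite (sum_in (mke H) (gV g)) -(gVE g (mke H)) /= => E.
  by rewrite /A (sum_split (fun w => gV g w u) H) -E addrC addKr.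
have Au u v (H : adj u v) : A u = z * gV g u v + gV g v u by rewrite (star _ _ H) subrK.
have hzz := zz1 H1 H2.
pose c := z / (z * z - 1).
exists (fun u => c * A u).
  move=> u; rewrite /Sigma /Rz -mulr_sumr.
  have SA : \sum_(v | adj u v) A v = z * A u + \sum_(v | adj u v) gV g u v.
    rewrite (eq_bigr (fun v => z * gV g v u + gV g u v)).
      by rewrite big_split /= -mulr_sumr.
    move=> v Huv; have Hvu : adj v u by rewrite (proj1 Hsimple).
    exact: Au.
  have SB : z * \sum_(v | adj u v) gV g u v = qC adj u * A u.
    rewrite mulr_sumr (eq_bigr (fun v => A u - gV g v u)); last by move=> v Huv; rewrite star.
    rewrite sumrB sum_deg /A; ring.
  have SB' : \sum_(v | adj u v) gV g u v = z^-1 * (qC adj u * A u) by rewrite -SB mulKf.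
  rewrite SA SB' /c; field; by rewrite Hz hzz.
move=> p; rewrite Fg /lift1 /dz; set e := pe p 0.
rewrite -gVE.
have H : adj (iota_ e) (tau_ e) := valP e.
have Hvu : adj (tau_ e) (iota_ e) by rewrite (proj1 Hsimple).
rewrite (Au _ _ H) (Au _ _ Hvu) /c; field; by rewrite Hz hzz.
Qed.

End G.
End Helpers.
Import Helpers.
Unset Implicit Arguments. Set Strict Implicit.

Theorem mainTheorem11 (V : finType) (adj : rel V)
  (Hsimple : simple_graph adj) (Hconn : graph_connected adj)
  (Hdeg : forall v : V, (2 <= deg adj v)%N)
  (z : C) (Hz0 : z != 0) :
  (* the eigenspace is contained in D_1 *)
  (forall f : ipath adj -> C, eigT z f -> D_m 1 f) /\
  (* under D_1 = Map(E), it equals Eq(S, z Id) *)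
  (forall g : oedge adj -> C,
      eigT z (lift1 g) <-> Eqsp (@Sop V adj) (fun h e => z * h e) g) /\
  (* for z not in {-1,0,1}: d_z is an isomorphism Eq(Sigma,R_z) = Eq(Delta,L_z) -> eigenspace *)
  (z != 1 -> z != -1 ->
     (forall f : V -> C,
        Eqsp (@Sigma V adj) (Rz adj z) f <-> Eqsp (@Delta V adj) (Lz adj z) f) /\
     (forall f : V -> C, Eqsp (@Sigma V adj) (Rz adj z) f -> eigT z (lift1 (@dz V adj z f))) /\
     (forall f1 f2 : V -> C,
        Eqsp (@Sigma V adj) (Rz adj z) f1 -> Eqsp (@Sigma V adj) (Rz adj z) f2 ->
        (forall e, @dz V adj z f1 e = @dz V adj z f2 e) -> forall v, f1 v = f2 v) /\
     (forall F : ipath adj -> C, eigT z F ->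
        exists2 f : V -> C, Eqsp (@Sigma V adj) (Rz adj z) f &
          forall p, F p = lift1 (@dz V adj z f) p)).
Proof.
split; first by move=> f; exact: part1 Hz0.
split; first by move=> g; exact: part2 Hdeg z g.
move=> H1 H2; split; first by move=> f; exact: p3a Hdeg z f Hz0.
split; first by move=> f Hf; apply/(part2 Hdeg); exact: Sop_dz Hsimple Hdeg z f Hz0 Hf.
split; first by move=> f1 f2 _ _; exact: p3c Hsimple Hdeg z f1 f2 Hz0 H1 H2.
by move=> F HF; exact: p3d Hsimple Hdeg z F Hz0 H1 H2 HF.
Qed.
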